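(* Let $d\ge 2$ and $r,t$ be positive integers, let $\mathcal{S}$ be a finite collection of spheres in $\mathbb{R}^d$, and let $\mathcal{N}\subseteq\mathcal{S}$ be a nested set of exactly $t(r+1)$ spheres. Suppose that the intersection graph $G(\mathcal{S}\setminus\mathcal{N})$ contains a collection $\mathcal{P}$ of $t^2(r+1)$ pairwise vertex-disjoint paths such that for each $P\in\mathcal{P}$: one end vertex of $P$ intersects the minimal sphere of $\mathcal{N}$, the other end vertex of $P$ intersects the maximal sphere of $\mathcal{N}$, and $P$ has length (number of edges) at most $r$. Then $G(\mathcal{S})$ contains $K_{t,t}$ as a subgraph.
   Context: A sphere in $\mathbb{R}^d$ is the boundary of a closed ball of positive radius; for a sphere $S$, $B(S)$ is the closed ball with boundary $S$. For a collection $\mathcal{X}$ of spheres, $G(\mathcal{X})$ is the graph with vertex set $\mathcal{X}$ in which two spheres are adjacent iff they intersect. A sphere $S'$ contains a different sphere $S$ if $B(S)\subseteq B(S')$. A collection is nested if for any two of its spheres one contains the other. Within a nested collection, the minimal (resp. maximal) sphere is the one containing no other (resp. contained in no other) sphere of the collection. Subgraphs need not be induced. *)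

(* Defs.v *)
From HB Require Import structures.
From mathcomp Require Import all_boot all_order all_algebra.
From mathcomp Require Import reals.
Set Implicit Arguments. Unset Strict Implicit. Unset Printing Implicit Defensive.
Import Order.TTheory GRing.Theory Num.Theory.
Local Open Scope ring_scope.

(* Spheres in R^d (R : realType), given by center and radius;
   the radius is required positive by a separate predicate. *)
Record sphere (R : realType) (d : nat) := Sphere { center : 'rV[R]_d; radius : R }.

Definition sqdist (R : realType) (d : nat) (x c : 'rV[R]_d) : R :=
  \sum_(i < d) (x 0 i - c 0 i) ^+ 2.

Definition is_sphere (R : realType) (d : nat) (S : sphere R d) : Prop := 0 < radius S.

Definition on_sphere (R : realType) (d : nat) (S : sphere R d) (x : 'rV[R]_d) : Prop :=
  sqdist x (center S) = radius S ^+ 2.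

Definition in_ball (R : realType) (d : nat) (S : sphere R d) (x : 'rV[R]_d) : Prop :=
  sqdist x (center S) <= radius S ^+ 2.

Definition intersect (R : realType) (d : nat) (S1 S2 : sphere R d) : Prop :=
  exists x, on_sphere S1 x /\ on_sphere S2 x.

Definition contains (R : realType) (d : nat) (S' S : sphere R d) : Prop :=
  forall x, in_ball S x -> in_ball S' x.

(* A collection of spheres is indexed by a finite type I via an injective s. *)
Definition nested (R : realType) (d : nat) (I : finType) (s : I -> sphere R d)
  (N : {set I}) : Prop :=
  forall i j, i \in N -> j \in N -> i != j -> contains (s i) (s j) \/ contains (s j) (s i).

Definition minimal_in (R : realType) (d : nat) (I : finType) (s : I -> sphere R d)
  (N : {set I}) (m : I) : Prop :=
  m \in N /\ forall j, j \in N -> j != m -> ~ contains (s m) (s j).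

Definition maximal_in (R : realType) (d : nat) (I : finType) (s : I -> sphere R d)
  (N : {set I}) (M : I) : Prop :=
  M \in N /\ forall j, j \in N -> j != M -> ~ contains (s j) (s M).

Fixpoint adj_chain (R : realType) (d : nat) (I : finType) (s : I -> sphere R d)
  (x : I) (p : seq I) : Prop :=
  match p with
  | [::] => True
  | y :: q => x != y /\ intersect (s x) (s y) /\ adj_chain s y q
  end.

Definition is_path_avoiding (R : realType) (d : nat) (I : finType) (s : I -> sphere R d)
  (N : {set I}) (x : I) (p : seq I) : Prop :=
  uniq (x :: p) /\ all (fun v => v \notin N) (x :: p) /\ adj_chain s x p.

Definition contains_Ktt (R : realType) (d : nat) (I : finType) (s : I -> sphere R d)
  (t : nat) : Prop :=
  exists A B : {set I}, [/\ #|A| = t, #|B| = t, [disjoint A & B] &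
    forall a b, a \in A -> b \in B -> intersect (s a) (s b)].

(* Main.v *)
Require Import Defs.
From HB Require Import structures.
From mathcomp Require Import all_boot all_order all_algebra.
From mathcomp Require Import reals boolp.
From mathcomp Require Import ring lra zify.
Import Order.TTheory GRing.Theory Num.Theory.
Local Open Scope ring_scope.


Lemma sum_sq_add {R : realType} {d : nat} (f g : 'I_d -> R) :
  \sum_i (f i + g i)^+2 = \sum_i f i ^+2 + 2 * \sum_i (f i * g i) + \sum_i g i ^+ 2.
Proof. rewrite mulr_sumr -!big_split /=; apply: eq_bigr => i _; ring. Qed.

Lemma sum_e {R : realType} {d : nat} (f : 'I_d -> R) k : \sum_l f l * (l == k)%:R = f k.
Proof.
rewrite (bigD1 k) //= eqxx mulr1 big1 ?addr0 // => l /negbTE ->; by rewrite mulr0.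
Qed.

Lemma sqdist_row {R : realType} {d : nat} (c c' : 'rV[R]_d) (g : 'I_d -> R) :
  sqdist (\row_l (c 0 l + g l)) c' = \sum_l ((c 0 l - c' 0 l) + g l)^+2.
Proof. rewrite /sqdist; apply: eq_bigr => i _; rewrite mxE; congr (_ ^+ 2); ring. Qed.

Lemma CS {R : realType} {d : nat} (u w : 'I_d -> R) :
  (\sum_i u i * w i)^+2 <= (\sum_i u i ^+ 2) * (\sum_i w i ^+ 2).
Proof.
set S := \sum_i u i * w i; set U := \sum_i u i ^+ 2; set W := \sum_i w i ^+ 2.
have W0 : 0 <= W by apply: sumr_ge0 => i _; exact: sqr_ge0.
have U0 : 0 <= U by apply: sumr_ge0 => i _; exact: sqr_ge0.
have [Wz|Wp] := eqVneq W 0.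
  have wz : forall i, w i = 0.
    move=> i; apply/eqP; rewrite -sqrf_eq0; apply/eqP.
    exact: (psumr_eq0P (fun i _ => sqr_ge0 (w i)) Wz).
  have -> : S = 0 by rewrite /S big1 // => i _; rewrite wz mulr0.
  by rewrite expr0n /= mulr_ge0.
have Wpos : 0 < W by rewrite lt_def Wp W0.
have H := sum_sq_add (fun i => W * u i) (fun i => - S * w i).
have H0 : 0 <= \sum_i (W * u i + - S * w i) ^+ 2.
  by apply: sumr_ge0 => i _; exact: sqr_ge0.
have E1 : \sum_i (W * u i) ^+ 2 = W^+2 * U by rewrite /U mulr_sumr; apply: eq_bigr => i _; ring.
have E2 : \sum_i (W * u i * (- S * w i)) = - (W * S) * \sum_i (u i * w i) by rewrite mulr_sumr; apply: eq_bigr => i _; ring.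
have E3 : \sum_i (- S * w i) ^+ 2 = S^+2 * W by rewrite /W mulr_sumr; apply: eq_bigr => i _; ring.
rewrite -/S in E2. rewrite H E1 E2 E3 in H0.
have : 0 <= W * (W * U - S ^+ 2) by lra.
rewrite pmulr_rge0 //; lra.
Qed.


Lemma sum_comb {R : realType} {d : nat} (a b : R) (k1 k2 : 'I_d) (g : 'I_d -> R) :
  \sum_l (a * (l == k1)%:R + b * (l == k2)%:R) * g l = a * g k1 + b * g k2.
Proof.
transitivity (a * \sum_l g l * (l == k1)%:R + b * \sum_l g l * (l == k2)%:R).
  rewrite !mulr_sumr -big_split; apply: eq_bigr => l _ /=; ring.
by rewrite !sum_e.
Qed.

Lemma sphere_ivt {R : realType} {d : nat} (hd : (2 <= d)%N) (c c' x y : 'rV[R]_d) rho rho' :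
  sqdist x c = rho^+2 -> sqdist y c = rho^+2 ->
  sqdist x c' <= rho'^+2 -> rho'^+2 <= sqdist y c' ->
  exists z, sqdist z c = rho^+2 /\ sqdist z c' = rho'^+2.
Proof.
move=> hx hy hx' hy'.
pose w := fun i => c 0 i - c' 0 i.
pose W := \sum_i w i ^+2.
have W0 : 0 <= W by apply: sumr_ge0 => i _; exact: sqr_ge0.
have key : forall z, sqdist z c' = sqdist z c + 2 * \sum_i ((z 0 i - c 0 i) * w i) + W.
  move=> z; have := sum_sq_add (fun i => z 0 i - c 0 i) w => /= <-.
  rewrite /sqdist; apply: eq_bigr => i _; rewrite /w; congr (_ ^+ 2); ring.
pose a := \sum_i ((x 0 i - c 0 i) * w i).
pose b := \sum_i ((y 0 i - c 0 i) * w i).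
have ha : a ^+ 2 <= rho ^+ 2 * W by rewrite -hx; exact: CS.
have hb : b ^+ 2 <= rho ^+ 2 * W by rewrite -hy; exact: CS.
have kx := key x; have ky := key y; rewrite -/a hx in kx; rewrite -/b hy in ky.
pose tau := (rho' ^+ 2 - rho ^+ 2 - W) / 2.
have hat : a <= tau by rewrite /tau; lra.
have htb : tau <= b by rewrite /tau; lra.
have ht2 : tau ^+ 2 <= rho ^+ 2 * W.
  have [t0|t0] := lerP 0 tau; nra.
have [Wz|Wp] := eqVneq W 0.
  exists x; split => //.
  rewrite Wz mulr0 in ha hb; rewrite Wz in kx ky.
  have a0 : a = 0 by apply/eqP; rewrite -sqrf_eq0 eq_le ha sqr_ge0.
  have b0 : b = 0 by apply/eqP; rewrite -sqrf_eq0 eq_le hb sqr_ge0.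
  lra.
have Wpos : 0 < W by rewrite lt_def Wp W0.
have i0lt : (0 < d)%N by apply: leq_trans hd.
pose i0 := Ordinal i0lt; pose i1 := Ordinal hd.
have i01 : i0 != i1 by [].
pose al0 := if w i0 == 0 then 1 else w i1.
pose be0 := if w i0 == 0 then 0 else - w i0.
pose v := fun l : 'I_d => al0 * (l == i0)%:R + be0 * (l == i1)%:R.
have vi0 : v i0 = al0 by rewrite /v /=; ring.
have vi1 : v i1 = be0 by rewrite /v /=; ring.
have vw : \sum_l v l * w l = 0.
  rewrite sum_comb /al0 /be0; case: eqP => [->|_]; ring.
pose Vq := \sum_l v l ^+ 2.
have Vqpos : 0 < Vq.
  have -> : Vq = al0 ^+ 2 + be0 ^+ 2.
    rewrite /Vq; under eq_bigr do rewrite expr2; rewrite sum_comb vi0 vi1; ring.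
  rewrite /al0 /be0; case: eqP => [_|/eqP h]; first lra.
  have : 0 < w i0 ^+ 2 by rewrite exprn_even_gt0.
  have := sqr_ge0 (w i1); lra.
pose al := tau / W.
have alW : al ^+ 2 * W <= rho ^+ 2.
  have -> : al ^+ 2 * W = tau ^+ 2 / W by rewrite /al; field; exact: lt0r_neq0.
  by rewrite ler_pdivrMr.
pose be := Num.sqrt ((rho ^+ 2 - al ^+ 2 * W) / Vq).
have be2 : be ^+ 2 = (rho ^+ 2 - al ^+ 2 * W) / Vq.
  rewrite sqr_sqrtr // divr_ge0 //; [lra | exact: ltW].
pose z := \row_l (c 0 l + (al * w l + be * v l)).
have zc : forall l, z 0 l - c 0 l = al * w l + be * v l.
  by move=> l; rewrite mxE; ring.
have hz : sqdist z c = rho ^+ 2.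
  transitivity (\sum_l (al * w l + be * v l) ^+ 2).
    by apply: eq_bigr => l _; rewrite zc.
  rewrite sum_sq_add.
  have -> : \sum_l (al * w l) ^+ 2 = al ^+ 2 * W by rewrite /W mulr_sumr; apply: eq_bigr => l _; ring.
  have -> : \sum_l (al * w l * (be * v l)) = al * be * \sum_l v l * w l.
    by rewrite mulr_sumr; apply: eq_bigr => l _; ring.
  have -> : \sum_l (be * v l) ^+ 2 = be ^+ 2 * Vq by rewrite /Vq mulr_sumr; apply: eq_bigr => l _; ring.
  rewrite vw be2; field; exact: lt0r_neq0.
have hd2 : \sum_i ((z 0 i - c 0 i) * w i) = tau.
  transitivity (al * W + be * \sum_l v l * w l).
    rewrite /W !mulr_sumr -big_split; apply: eq_bigr => l _ /=; rewrite zc; ring.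
  rewrite vw /al; field; exact: lt0r_neq0.
exists z; split => //; rewrite key hz hd2 /tau; lra.
Qed.


Lemma sqdist_shift_e {R : realType} {d : nat} (c c' : 'rV[R]_d) (i0 : 'I_d) (k : R) :
  sqdist (\row_l (c 0 l + k * (l == i0)%:R)) c' =
  sqdist c c' + 2 * k * (c 0 i0 - c' 0 i0) + k ^+ 2.
Proof.
rewrite sqdist_row sum_sq_add.
have -> : \sum_l ((c 0 l - c' 0 l) * (k * (l == i0)%:R)) =
          \sum_l (k * (c 0 l - c' 0 l)) * (l == i0)%:R.
  by apply: eq_bigr => l _; ring.
have -> : \sum_l (k * (l == i0)%:R) ^+ 2 = \sum_l (fun _ => k ^+ 2) l * (l == i0)%:R.
  by apply: eq_bigr => l _ /=; case: (l == i0) => /=; ring.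
rewrite (sum_e (fun l => k * (c 0 l - c' 0 l))) sum_e /= /sqdist; ring.
Qed.

Lemma sqdist0 {R : realType} {d : nat} (c : 'rV[R]_d) : sqdist c c = 0.
Proof. by rewrite /sqdist big1 // => i _; rewrite subrr expr0n. Qed.

Lemma contains_alg {R : realType} {d : nat} (hd : (0 < d)%N) (S S' : sphere R d) :
  contains S' S -> sqdist (center S) (center S') + radius S ^+ 2 <= radius S' ^+ 2.
Proof.
move=> H; pose i0 := Ordinal hd.
have pt : forall sg : R, sg ^+ 2 = 1 ->
   sqdist (center S) (center S') + 2 * (sg * radius S) * (center S 0 i0 - center S' 0 i0)
     + (sg * radius S) ^+ 2 <= radius S' ^+ 2.
  move=> sg hs; rewrite -sqdist_shift_e; apply: H.
  rewrite /in_ball sqdist_shift_e sqdist0 subrr exprMn hs; lra.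
have hm : (-1 : R) ^+ 2 = 1 by rewrite sqrrN expr1n.
have := pt 1 (expr1n _ _); have := pt (-1) hm.
lra.
Qed.

Lemma boundary {R : realType} {d : nat} (S S' : sphere R d) y : 0 < radius S' -> contains S' S ->
  on_sphere S' y -> radius S ^+ 2 <= sqdist y (center S).
Proof.
move=> rp H; rewrite /on_sphere => hy; rewrite leNgt; apply/negP => lt.
set c := center S in lt *; set c' := center S' in hy.
set a := sqdist y c in lt.
set q := radius S' ^+ 2 in hy.
have qp : 0 < q by rewrite /q exprn_gt0.
set del := radius S ^+ 2 - a.
have dp : 0 < del by rewrite /del; lra.
set b0 := \sum_l (y 0 l - c 0 l) * (y 0 l - c' 0 l).
set D := 2 * `|b0| + q + del.
have Dp : 0 < D by rewrite /D; have := normr_ge0 b0; lra.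
set eps := del / D.
have ep : 0 < eps by rewrite /eps divr_gt0.
have eD : eps * D = del by rewrite /eps mulrAC -mulrA divff ?mulr1 // lt0r_neq0.
have e1 : eps <= 1.
  have : eps * D <= 1 * D by rewrite eD mul1r /D; have := normr_ge0 b0; lra.
  by rewrite ler_pM2r.
pose y' := \row_l (y 0 l + eps * (y 0 l - c' 0 l)).
have h1 : sqdist y' c = a + 2 * (eps * b0) + eps ^+ 2 * q.
  rewrite /y' sqdist_row sum_sq_add -hy.
  have -> : \sum_l (y 0 l - c 0 l) * (eps * (y 0 l - c' 0 l)) = eps * b0.
    by rewrite /b0 mulr_sumr; apply: eq_bigr => l _; ring.
  have -> : \sum_l (eps * (y 0 l - c' 0 l)) ^+ 2 = eps ^+ 2 * sqdist y c'.
    by rewrite /sqdist mulr_sumr; apply: eq_bigr => l _; ring.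
  by [].
have h2 : sqdist y' c' = (1 + eps) ^+ 2 * q.
  rewrite -hy /y' /sqdist mulr_sumr; apply: eq_bigr => l _; rewrite mxE; ring.
have hb : b0 <= `|b0| := ler_norm b0.
have : in_ball S y'.
  rewrite /in_ball h1.
  have : eps * b0 <= eps * `|b0| by rewrite ler_pM2l.
  have : eps ^+ 2 * q <= eps * q by rewrite expr2 -mulrA ler_pM2l // ler_piMl // ltW.
  rewrite /D in eD; rewrite /del in eD dp.
  have := normr_ge0 b0; nra.
move/H; rewrite /in_ball -/c' h2 -/q.
have : q < (1 + eps) ^+ 2 * q.
  rewrite ltr_pMl //; nra.
lra.
Qed.



Definition Hyp {R : realType} {d : nat} {I : finType} (s : I -> sphere R d) (N : {set I}) :=
  [/\ (2 <= d)%N, forall i, is_sphere (s i), injective s & nested s N].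

Lemma sqdist_eq0 {R : realType} {d : nat} (c c' : 'rV[R]_d) : sqdist c c' = 0 -> c = c'.
Proof.
move=> h; apply/rowP => l; apply/eqP; rewrite -subr_eq0 -sqrf_eq0; apply/eqP.
exact: (psumr_eq0P (fun i _ => sqr_ge0 (c 0 i - c' 0 i)) h).
Qed.

Lemma sphere_eq {R : realType} {d : nat} (S S' : sphere R d) :
  center S = center S' -> radius S = radius S' -> S = S'.
Proof. by case: S => c r; case: S' => c' r' /= -> ->. Qed.

Lemma ord_lemma {R : realType} {d : nat} {I : finType} {s : I -> sphere R d} {N : {set I}} :
  Hyp s N -> forall {i j}, i \in N -> j \in N -> i != j ->
  (radius (s i) < radius (s j) /\ contains (s j) (s i)) \/
  (radius (s j) < radius (s i) /\ contains (s i) (s j)).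
Proof.
case=> hd hs inj nest.
have hd0 : (0 < d)%N by apply: leq_trans hd.
have side : forall i j, i != j -> contains (s i) (s j) -> radius (s j) < radius (s i).
  move=> i j ij hc; have := contains_alg hd0 (s j) (s i) hc.
  have := hs i; have := hs j; rewrite /is_sphere => pj pi.
  have sq0 : 0 <= sqdist (center (s j)) (center (s i)).
    by apply: sumr_ge0 => l _; exact: sqr_ge0.
  move=> h; rewrite lt_def; apply/andP; split; last by nra.
  apply/eqP => req; move: h; rewrite req => h.
  have : sqdist (center (s j)) (center (s i)) = 0 by lra.
  move/sqdist_eq0 => ceq.
  by move/negP: ij; apply; apply/eqP/inj/sphere_eq.
move=> i j iN jN ij.
case: (nest i j iN jN ij) => hc.
  by right; split => //; exact: side.
by left; split => //; apply: side => //; rewrite eq_sym.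
Qed.

Lemma rad_lt {R : realType} {d : nat} {I : finType} {s : I -> sphere R d} {N : {set I}} {i} {j} :
  Hyp s N -> i \in N -> j \in N -> radius (s i) < radius (s j) -> contains (s j) (s i).
Proof.
move=> H iN jN lt; have ij : i != j by apply/eqP => e; move: lt; rewrite e ltxx.
case: (ord_lemma H iN jN ij) => [[]//|[h _]]; move: lt; rewrite lt_gtF //.
Qed.

Lemma rad_eq {R : realType} {d : nat} {I : finType} {s : I -> sphere R d} {N : {set I}} {i} {j} :
  Hyp s N -> i \in N -> j \in N -> radius (s i) = radius (s j) -> i = j.
Proof.
move=> H iN jN e; apply/eqP/negPn/negP => ij.
by case: (ord_lemma H iN jN ij); rewrite e ltxx => -[].
Qed.

Lemma lo_from {R : realType} {d : nat} {I : finType} {s : I -> sphere R d} {N : {set I}} {a} {j} {z} :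
  Hyp s N -> a \in N -> j \in N -> radius (s a) <= radius (s j) -> on_sphere (s a) z ->
  sqdist z (center (s j)) <= radius (s j) ^+ 2.
Proof.
move=> H aN jN; rewrite le_eqVlt => /orP[/eqP e|lt] hz.
  by rewrite -(rad_eq H aN jN e) hz.
by apply: (rad_lt H aN jN lt); rewrite /in_ball hz.
Qed.

Lemma hi_from {R : realType} {d : nat} {I : finType} {s : I -> sphere R d} {N : {set I}} {b} {j} {z} :
  Hyp s N -> b \in N -> j \in N -> radius (s j) <= radius (s b) -> on_sphere (s b) z ->
  radius (s j) ^+ 2 <= sqdist z (center (s j)).
Proof.
move=> H bN jN; rewrite le_eqVlt => /orP[/eqP e|lt] hz.
  by rewrite (rad_eq H jN bN e) hz.
case: (H) => _ hs _ _.
exact: (boundary _ _ _ (hs b) (rad_lt H jN bN lt) hz).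
Qed.

Lemma meet_of {R : realType} {d : nat} {I : finType} {s : I -> sphere R d} {N : {set I}} {v} {j} {x} {y} :
  Hyp s N -> on_sphere (s v) x -> on_sphere (s v) y ->
  sqdist x (center (s j)) <= radius (s j) ^+ 2 ->
  radius (s j) ^+ 2 <= sqdist y (center (s j)) -> intersect (s v) (s j).
Proof.
case=> hd _ _ _ hx hy h1 h2.
have [z [hz1 hz2]] := sphere_ivt hd _ _ _ _ _ _ hx hy h1 h2.
by exists z.
Qed.

Lemma interval_meet {R : realType} {d : nat} {I : finType} {s : I -> sphere R d} {N : {set I}} {v} {a} {b} {j} :
  Hyp s N -> a \in N -> b \in N -> j \in N ->
  radius (s a) <= radius (s j) -> radius (s j) <= radius (s b) ->
  intersect (s v) (s a) -> intersect (s v) (s b) -> intersect (s v) (s j).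
Proof.
move=> H aN bN jN h1 h2 [x [hx1 hx2]] [y [hy1 hy2]].
apply: (meet_of H hx1 hy1).
  exact: (lo_from H aN jN h1 hx2).
exact: (hi_from H bN jN h2 hy2).
Qed.

Lemma chain_meet {R : realType} {d : nat} {I : finType} (s : I -> sphere R d)
  (A B : I -> Prop) x q :
  (forall u w, intersect (s u) (s w) -> ~ B u -> A w) ->
  A x -> B (last x q) -> adj_chain s x q -> exists2 v, v \in x :: q & (A v /\ B v).
Proof.
move=> step; elim: q x => [|y q IH] x /= ax bl ch.
  by exists x; rewrite ?inE ?eqxx.
case: (EM (B x)) => bx.
  by exists x; rewrite ?inE ?eqxx.
case: ch => _ [ixy ch].
have [v vin hv] := IH y (step _ _ ixy bx) bl ch.
by exists v => //; rewrite inE vin orbT.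
Qed.

Lemma min_le {R : realType} {d : nat} {I : finType} {s : I -> sphere R d} {N : {set I}} {m} :
  Hyp s N -> minimal_in s N m -> forall j, j \in N -> radius (s m) <= radius (s j).
Proof.
move=> H [mN hm] j jN; have [->//|jm] := eqVneq j m.
case: (ord_lemma H mN jN); first by rewrite eq_sym.
  by case=> /ltW.
by case=> _ /(hm j jN jm).
Qed.

Lemma max_le {R : realType} {d : nat} {I : finType} {s : I -> sphere R d} {N : {set I}} {M} :
  Hyp s N -> maximal_in s N M -> forall j, j \in N -> radius (s j) <= radius (s M).
Proof.
move=> H [MN hM] j jN; have [->//|jM] := eqVneq j M.
case: (ord_lemma H jN MN jM).
  by case=> /ltW.
by case=> _ /(hM j jN jM).
Qed.

Lemma cover_lvl {R : realType} {d : nat} {I : finType} {s : I -> sphere R d} {N : {set I}} {m M} x q :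
  Hyp s N -> minimal_in s N m -> maximal_in s N M ->
  adj_chain s x q ->
  (intersect (s x) (s m) /\ intersect (s (last x q)) (s M)) \/
  (intersect (s x) (s M) /\ intersect (s (last x q)) (s m)) ->
  forall j, j \in N -> exists2 v, v \in x :: q & intersect (s v) (s j).
Proof.
move=> H hm hM ch ends j jN.
have mN : m \in N by case: hm.
have MN : M \in N by case: hM.
pose Lo v := exists z, on_sphere (s v) z /\ sqdist z (center (s j)) <= radius (s j) ^+ 2.
pose Hi v := exists z, on_sphere (s v) z /\ radius (s j) ^+ 2 <= sqdist z (center (s j)).
have fin : forall v, Lo v -> Hi v -> intersect (s v) (s j).
  move=> v [z1 [h1 h1']] [z2 [h2 h2']]; exact: (meet_of H h1 h2 h1' h2').
have loM : forall v, intersect (s v) (s m) -> Lo v.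
  move=> v [z [zv zm]]; exists z; split => //; exact: (lo_from H mN jN (min_le H hm _ jN) zm).
have hiM : forall v, intersect (s v) (s M) -> Hi v.
  move=> v [z [zv zM]]; exists z; split => //; exact: (hi_from H MN jN (max_le H hM _ jN) zM).
case: ends => [[e1 e2]|[e1 e2]].
  have step : forall u w, intersect (s u) (s w) -> ~ Hi u -> Lo w.
    move=> u w [z [zu zw]] nh; exists z; split => //.
    case: (lerP (radius (s j) ^+ 2) (sqdist z (center (s j)))) => h.
      by case: nh; exists z.
    exact: ltW.
  have [v vin [hl hh]] := chain_meet s _ _ _ _ step (loM _ e1) (hiM _ e2) ch.
  by exists v => //; apply: fin.
have step : forall u w, intersect (s u) (s w) -> ~ Lo u -> Hi w.
  move=> u w [z [zu zw]] nh; exists z; split => //.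
  case: (lerP (sqdist z (center (s j))) (radius (s j) ^+ 2)) => h.
    by case: nh; exists z.
  exact: ltW.
have [v vin [hh hl]] := chain_meet s _ _ _ _ step (hiM _ e1) (loM _ e2) ch.
by exists v => //; apply: fin.
Qed.

Lemma count_cover {I : finType} (l : seq I) (J : I -> {set I}) (X : {set I}) n :
  (forall j, j \in X -> exists2 v, v \in l & j \in J v) ->
  (forall v, v \in l -> (#|J v| <= n)%N) -> (#|X| <= size l * n)%N.
Proof.
elim: l X => [|v l IH] X hc hn /=.
  rewrite mul0n leqn0 cards_eq0; apply/eqP/setP => j; rewrite inE.
  by apply/negP => /hc [].
rewrite -(cardsID (J v) X) mulSn.
apply: leq_add.
  apply: leq_trans (hn v (mem_head _ _)); apply: subset_leq_card; exact: subsetIr.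
apply: IH.
  move=> j; rewrite inE => /andP[jn jX]; have [w] := hc j jX.
  rewrite inE => /orP[/eqP ->|wl] hj; first by rewrite hj in jn.
  by exists w.
by move=> w wl; apply: hn; rewrite inE wl orbT.
Qed.

Lemma subset_size {T : finType} (A : {set T}) n :
  (n <= #|A|)%N -> exists B : {set T}, B \subset A /\ #|B| = n.
Proof.
elim: n => [|n IH] h.
  by exists set0; rewrite sub0set cards0.
have [B [BA cB]] := IH (ltnW h).
have : ~~ (A \subset B).
  by apply/negP => /subset_leq_card; rewrite cB; lia.
case/subsetPn => x xA xB.
exists (x |: B); split.
  by rewrite subUset sub1set xA BA.
by rewrite cardsU1 xB cB.
Qed.

Theorem lemma4p1 (R : realType) (d r t : nat) (I : finType) (s : I -> sphere R d)
  (N : {set I}) (m M : I)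
  (P : 'I_(t ^ 2 * r.+1) -> I * seq I) :
  (2 <= d)%N -> (0 < r)%N -> (0 < t)%N ->
  (forall i, is_sphere (s i)) -> injective s ->
  nested s N -> #|N| = (t * r.+1)%N ->
  minimal_in s N m -> maximal_in s N M ->
  (forall k, is_path_avoiding s N (P k).1 (P k).2) ->
  (forall k1 k2, k1 != k2 -> forall v, v \in (P k1).1 :: (P k1).2 ->
      v \notin (P k2).1 :: (P k2).2) ->
  (forall k, (size (P k).2 <= r)%N) ->
  (forall k,
     (intersect (s (P k).1) (s m) /\ intersect (s (last (P k).1 (P k).2)) (s M)) \/
     (intersect (s (P k).1) (s M) /\ intersect (s (last (P k).1 (P k).2)) (s m))) ->
  contains_Ktt s t.
Proof.
move=> hd rp tp hs inj nest cN hm hM hpath hdisj hsize hends.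
have H : Hyp s N by split.
pose J v := [set j in N | `[< intersect (s v) (s j) >]].
have JN : forall v j, j \in J v -> j \in N by move=> v j; rewrite inE => /andP[].
have Jint : forall v j, j \in J v -> intersect (s v) (s j).
  by move=> v j; rewrite inE => /andP[_ /asboolP].
have inJ : forall v j, j \in N -> intersect (s v) (s j) -> j \in J v.
  by move=> v j jN hj; rewrite inE jN; apply/asboolP.
pose path k := (P k).1 :: (P k).2.
have exv : forall k, exists2 v, v \in path k & (t <= #|J v|)%N.
  move=> k; case: (hpath k) => _ [_ ch].
  have cov := cover_lvl (P k).1 (P k).2 H hm hM ch (hends k).
  case: (EM (exists2 v, v \in path k & (t <= #|J v|)%N)) => // nex.
  have : (#|N| <= size (path k) * (t - 1))%N.
    apply: (count_cover _ J).
      move=> j jN; have [v vin hv] := cov j jN.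
      by exists v => //; apply: inJ.
    move=> v vin; rewrite leqNgt; apply/negP => lt.
    by apply: nex; exists v => //; lia.
  have := hsize k; rewrite /= cN; nia.
pose vk k := odflt m [pick v | (v \in path k) && (t <= #|J v|)%N].
have vkP : forall k, vk k \in path k /\ (t <= #|J (vk k)|)%N.
  move=> k; rewrite /vk; case: pickP => [v /andP[]//|none].
  by have [v vin vt] := exv k; have := none v; rewrite vin vt.
pose i0 k := odflt m [pick j in J (vk k)].
have i0P : forall k, i0 k \in J (vk k).
  move=> k; rewrite /i0; case: pickP => [//|none].
  have : (0 < #|J (vk k)|)%N by have := (vkP k).2; lia.
  by rewrite card_gt0 => /set0Pn [j hj]; have := none j; rewrite hj.
pose ak k := [arg min_(j < i0 k in J (vk k)) radius (s j)]%O.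
have akP : forall k, ak k \in J (vk k) /\
    forall j, j \in J (vk k) -> radius (s (ak k)) <= radius (s j).
  move=> k; rewrite /ak; case: arg_minP => [|a ha hmin]; first exact: i0P.
  by split.
set n := (t ^ 2 * r.+1)%N.
have [a aN aK] : exists2 a, a \in N & (t <= #|[set k | ak k == a]|)%N.
  case: (EM (exists2 a, a \in N & (t <= #|[set k | ak k == a]|)%N)) => // nex.
  have hle : forall a, a \in N -> (#|[set k | ak k == a]| <= t - 1)%N.
    move=> a aN; rewrite leqNgt; apply/negP => lt.
    by apply: nex; exists a => //; lia.
  have e : n = (\sum_(a in N) #|[set k | ak k == a]|)%N.
    rewrite -{1}(card_ord n) -sum1_card (partition_big ak (mem N)) /=.
      apply: eq_bigr => b _; rewrite sum1dep_card; apply: eq_card => k; rewrite !inE.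
      done.
    by move=> k _; apply: (JN (vk k)); exact: (akP k).1.
  have : (\sum_(a in N) #|[set k | ak k == a]| <= \sum_(a in N) (t - 1))%N.
    by apply: leq_sum => b bN; apply: hle.
  rewrite sum_nat_const -e cN /n; nia.
have [K [KK cK]] := subset_size _ _ aK.
have akK : forall k, k \in K -> ak k = a.
  by move=> k kK; have := subsetP KK k kK; rewrite inE => /eqP.
have [kk kkK] : exists kk, kk \in K.
  have : (0 < #|K|)%N by rewrite cK.
  by rewrite card_gt0 => /set0Pn [k hk]; exists k.
pose ps := [arg min_(k < kk in K) #|J (vk k)|]%O.
have [psK psmin] : ps \in K /\ forall k, k \in K -> (#|J (vk ps)| <= #|J (vk k)|)%N.
  rewrite /ps; case: arg_minP => [//|k hk hmin]; by split.
have main : forall k, k \in K -> J (vk ps) \subset J (vk k).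
  move=> k kK; apply/subsetP => j jps.
  have [aV amin] := akP k; rewrite akK // in aV amin.
  have [aV' amin'] := akP ps; rewrite akK // in aV' amin'.
  have jN := JN _ _ jps.
  case: (boolP [exists b in J (vk k), radius (s j) <= radius (s b)]).
    case/existsP => b /andP[bV jb]; apply: (inJ _ _ jN).
    exact: (interval_meet H (JN _ _ aV) (JN _ _ bV) jN (amin' j jps) jb (Jint _ _ aV) (Jint _ _ bV)).
  move/existsPn => nob.
  have sub : J (vk k) \subset J (vk ps) :\ j.
    apply/subsetP => b bV.
    have lt : radius (s b) < radius (s j).
      by have := nob b; rewrite bV /= -ltNge.
    rewrite in_setD1; apply/andP; split.
      by apply/eqP => e; move: lt; rewrite e ltxx.
    apply: inJ (JN _ _ bV) _.
    exact: (interval_meet H (JN _ _ aV') jN (JN _ _ bV) (amin b bV) (ltW lt) (Jint _ _ aV') (Jint _ _ jps)).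
  have h1 := subset_leq_card sub.
  have h2 := cardsD1 j (J (vk ps)); rewrite jps in h2.
  have := psmin k kK; lia.
have [B [BJ cB]] := subset_size _ _ (vkP ps).2.
exists (vk @: K), B; split.
- rewrite card_in_imset ?cK // => k1 k2 k1K k2K e.
  apply/eqP/negPn/negP => ne.
  by have := hdisj k1 k2 ne (vk k1) (vkP k1).1; rewrite e (vkP k2).1.
- exact: cB.
- rewrite -setI_eq0; apply/eqP/setP => x; rewrite !inE; apply/negP => /andP[/imsetP [k kK ->] xB].
  have xN := JN _ _ (subsetP BJ _ xB).
  case: (hpath k) => _ [hall _].
  by have := (allP hall) _ (vkP k).1; rewrite xN.
- move=> x y /imsetP [k kK ->] yB.
  apply: Jint; apply: (subsetP (main k kK)); exact: (subsetP BJ).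
Qed.
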